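(* Let $q>1$ and let $\rho$ be a positive $2\pi$-periodic $C^2$ function with $(\ln\rho)''(t)<\sqrt{q}/(1+\sqrt{q})$ for all $t$. For $\eta\in\mathbb{S}^1$ and $j,l\in\{1,2\}$ let $\mathcal{T}_{j,l}\eta$ be defined as follows: with $\eta_l=(-1)^{l-1}\eta$, $\theta_q=\arccos(1/\sqrt{q})$ and $h(\theta)=\frac{\sqrt{q}\sin\theta}{\sqrt{q}\cos\theta+1}$, the equation $(\ln\rho)'(\theta)=h(\theta-\theta_{\eta_l})$ has exactly two solutions $\theta\in\mathbb{R}/(2\pi\mathbb{Z})$; $\mathcal{T}_{1,l}\eta$ is the one with $\theta-\theta_{\eta_l}\in(\theta_q-\pi,\pi-\theta_q)$ and $\mathcal{T}_{2,l}\eta$ the one with $\theta-\theta_{\eta_l}\in(\pi-\theta_q,\pi+\theta_q)$ (mod $2\pi$). Then for each $\eta\in\mathbb{S}^1$ and each $l\in\{1,2\}$ (with $l+1$ taken in $\{1,2\}$ modulo $2$), $$\operatorname{sgn}\rho'(\mathcal{T}_{1,l}\eta)=(-1)^{l-1}\operatorname{sgn}\sin(\mathcal{T}_{1,l}\eta-\theta_\eta)=(-1)^{l-1}\operatorname{sgn}\sin(\mathcal{T}_{2,l+1}\eta-\theta_\eta)=\operatorname{sgn}\rho'(\mathcal{T}_{2,l+1}\eta).$$ Moreover, for each $l\in\{1,2\}$ and every $\eta\in\mathbb{S}^1$ with $\rho'(\theta_{\eta_l})\neq0$, one has $0<|\mathcal{T}_{2,l+1}\eta-\theta_{\eta_l}|<|\mathcal{T}_{1,l}\eta-\theta_{\eta_l}|<\pi-\theta_q$,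 and $$\rho(\mathcal{T}_{2,l+1}\eta)<\rho(\mathcal{T}_{1,l}\eta)\quad\text{and}\quad 0<|\sin(\mathcal{T}_{2,l+1}\eta-\theta_\eta)|<|\sin(\mathcal{T}_{1,l}\eta-\theta_\eta)|.$$
   Context: We identify $\mathbb{S}^1$ with $\mathbb{R}/(2\pi\mathbb{Z})$ via $\theta\mapsto(\cos\theta,\sin\theta)^T$; $\theta_\eta$ denotes the angular coordinate of $\eta$. Differences of angles such as $\mathcal{T}_{1,l}\eta-\theta_{\eta_l}$ and $\mathcal{T}_{2,l+1}\eta-\theta_{\eta_l}$ are taken as their representatives in $(-\pi,\pi]$ (so the first lies in $(\theta_q-\pi,\pi-\theta_q)$ and the second in $(-\theta_q,\theta_q)$). *)

(* Defs.v *)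
From Stdlib Require Import Reals Lra.
From Coquelicot Require Import Coquelicot.
Open Scope R_scope.

Definition theta_q (q : R) : R := acos (/ sqrt q).

Definition hfun (q th : R) : R := sqrt q * sin th / (sqrt q * cos th + 1).

Definition sgn (x : R) : R :=
  if Rlt_dec 0 x then 1 else if Rlt_dec x 0 then -1 else 0.

Definition congr2pi (x y : R) : Prop := exists k : Z, x = y + 2 * PI * IZR k.

Definition angrep (x d : R) : Prop := - PI < d <= PI /\ congr2pi x d.

(* eta in S^1 is given by its angular coordinate th_eta (any real
   representative).  eta_l = (-1)^(l-1) eta has angle th_eta + (l-1) pi. *)
Definition eta_ang (th_eta : R) (l : nat) : R := th_eta + INR (l - 1) * PI.

Definition lnext (l : nat) : nat := if Nat.eqb l 1 then 2%nat else 1%nat.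

Definition dlnrho (rho : R -> R) (t : R) : R := Derive (fun s => ln (rho s)) t.

Definition in_Tint (q : R) (j : nat) (x : R) : Prop :=
  if Nat.eqb j 1 then theta_q q - PI < x < PI - theta_q q
  else PI - theta_q q < x < PI + theta_q q.

Definition isT (q : R) (rho : R -> R) (th_eta : R) (j l : nat) (T : R) : Prop :=
  dlnrho rho T = hfun q (T - eta_ang th_eta l) /\
  exists k : Z, in_Tint q j (T - eta_ang th_eta l + 2 * PI * IZR k).

(* Main.v *)
Require Import Defs.
From Stdlib Require Import Reals Lra Lia ZArith.
From Coquelicot Require Import Coquelicot.
Open Scope R_scope.

Lemma per_nat (g : R -> R) : (forall t, g (t + 2*PI) = g t) ->
  forall n t, g (t + 2*PI*INR n) = g t.
Proof.
  intros H n; induction n as [|n IH]; intros t.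
  - simpl. f_equal; ring.
  - rewrite S_INR. replace (t + 2*PI*(INR n + 1)) with ((t + 2*PI*INR n) + 2*PI) by ring.
    rewrite H; apply IH.
Qed.

Lemma per_Z (g : R -> R) : (forall t, g (t + 2*PI) = g t) ->
  forall t k, g (t + 2*PI*IZR k) = g t.
Proof.
  intros H t k.
  destruct (Z_le_gt_dec 0 k) as [Hk|Hk].
  - destruct (Z_of_nat_complete k Hk) as [n ->].
    rewrite <- INR_IZR_INZ. apply per_nat; auto.
  - assert (Hk' : (0 <= - k)%Z) by lia.
    destruct (Z_of_nat_complete _ Hk') as [n Hn].
    assert (IZR k = - INR n) by (rewrite INR_IZR_INZ, <- Hn, opp_IZR; ring).
    rewrite H0. rewrite <- (per_nat g H n (t + 2*PI*(- INR n))).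
    f_equal; ring.
Qed.

Lemma Rlt_IZR_01 (n : Z) : -1 < IZR n < 1 -> n = 0%Z.
Proof. intros [H1 H2]. apply lt_IZR in H1. apply lt_IZR in H2. lia. Qed.

Lemma angrep_uniq (x y : R) (n : Z) : - PI < x <= PI -> - PI < y <= PI ->
  x = y + 2*PI*IZR n -> x = y.
Proof.
  intros Hx Hy E. assert (HP := PI_RGT_0).
  assert (n = 0%Z).
  { apply Rlt_IZR_01. split.
    - apply Rmult_lt_reg_l with (2*PI); [lra|]. nra.
    - apply Rmult_lt_reg_l with (2*PI); [lra|]. nra. }
  subst n. rewrite E; simpl; ring.
Qed.

Definition Fr (rho : R -> R) (t : R) : R := Derive rho t / rho t.

Lemma dln_eq rho : (forall t, 0 < rho t) -> (forall t, ex_derive rho t) ->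
  forall t, dlnrho rho t = Fr rho t.
Proof.
  intros hpos hd1 t. unfold dlnrho, Fr.
  apply is_derive_unique. auto_derive.
  - repeat split; auto.
  - change (Derive (fun x => rho x) t) with (Derive rho t). unfold Rdiv; ring.
Qed.

Lemma Fr_der rho : (forall t, 0 < rho t) -> (forall t, ex_derive rho t) ->
  (forall t, ex_derive (Derive rho) t) -> forall t, ex_derive (Fr rho) t.
Proof.
  intros hpos hd1 hd2 t. unfold Fr.
  apply ex_derive_div; auto. apply Rgt_not_eq, hpos.
Qed.

Lemma Fr_bound q rho : (forall t, 0 < rho t) -> (forall t, ex_derive rho t) ->
  (forall t, Derive (Derive (fun s => ln (rho s))) t < sqrt q / (1 + sqrt q)) ->
  forall t, Derive (Fr rho) t < sqrt q / (1 + sqrt q).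
Proof.
  intros hpos hd1 hc t.
  rewrite <- (Derive_ext (Derive (fun s => ln (rho s)))).
  - apply hc.
  - intros; apply (dln_eq rho hpos hd1).
Qed.

Lemma Dper rho : (forall t, rho (t + 2*PI) = rho t) -> (forall t, ex_derive rho t) ->
  forall t, Derive rho (t + 2*PI) = Derive rho t.
Proof.
  intros hper hd1 t.
  assert (H : is_derive (fun x => rho (x + 2*PI)) t (1 * Derive rho (t + 2*PI))).
  { apply (is_derive_comp rho (fun x => x + 2*PI)).
    - apply Derive_correct, hd1.
    - auto_derive; auto; ring. }
  rewrite Rmult_1_l in H.
  symmetry. apply is_derive_unique.
  apply (is_derive_ext (fun x => rho (x + 2*PI))); auto.
Qed.

Lemma Fr_per rho : (forall t, rho (t + 2*PI) = rho t) -> (forall t, ex_derive rho t) ->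
  forall t, Fr rho (t + 2*PI) = Fr rho t.
Proof. intros hper hd1 t. unfold Fr. rewrite Dper, hper; auto. Qed.

Lemma qfacts q : 1 < q -> 1 < sqrt q /\ cos (theta_q q) = / sqrt q /\
  0 < theta_q q < PI/2 /\ 0 < sin (theta_q q).
Proof.
  intros hq.
  assert (hs : 1 < sqrt q).
  { rewrite <- sqrt_1. apply sqrt_lt_1; lra. }
  assert (hi : 0 < / sqrt q < 1).
  { split. apply Rinv_0_lt_compat; lra. rewrite <- Rinv_1. apply Rinv_lt_contravar; lra. }
  assert (hc : cos (theta_q q) = / sqrt q) by (unfold theta_q; apply cos_acos; lra).
  assert (hb := acos_bound (/ sqrt q)). fold (theta_q q) in hb.
  assert (ht : 0 < theta_q q < PI/2).
  { split.
    - destruct (Rle_lt_or_eq_dec 0 (theta_q q)) as [h|h]; [lra|auto|].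
      rewrite <- h, cos_0 in hc. lra.
    - destruct (Rlt_le_dec (theta_q q) (PI/2)) as [h|h]; auto.
      assert (cos (theta_q q) <= 0) by (apply cos_le_0; lra). lra. }
  repeat split; auto; try lra.
  apply sin_gt_0; lra.
Qed.

Definition bb (j : nat) : R := if Nat.eqb j 1 then 1 else -1.
Definition mm (q : R) (j : nat) : R := if Nat.eqb j 1 then PI - theta_q q else theta_q q.

Lemma mm_facts q j : 1 < q -> (j = 1%nat \/ j = 2%nat) ->
  0 < mm q j < PI /\ sqrt q * cos (mm q j) + bb j = 0 /\ 0 < sin (mm q j)
  /\ (bb j = 1 \/ bb j = -1).
Proof.
  intros hq hj. destruct (qfacts q hq) as (hs & hc & ht & hsn).
  assert (hP := PI_RGT_0).
  destruct hj as [-> | ->]; unfold mm, bb; simpl.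
  - rewrite Rtrigo_facts.cos_pi_minus, sin_PI_x, hc. repeat split; try lra; auto.
    field; lra.
  - rewrite hc. repeat split; try lra; auto. field; lra.
Qed.

Lemma den_pos q j phi : 1 < q -> (j = 1%nat \/ j = 2%nat) ->
  - mm q j < phi < mm q j -> 0 < sqrt q * cos phi + bb j.
Proof.
  intros hq hj hphi.
  destruct (mm_facts q j hq hj) as (hm & he & _ & _).
  destruct (qfacts q hq) as (hs & _).
  assert (cos (mm q j) < cos phi).
  { assert (cos phi = cos (Rabs phi)).
    { unfold Rabs; destruct (Rcase_abs phi); auto. rewrite cos_neg; auto. }
    rewrite H. apply cos_decreasing_1; try lra.
    apply Rabs_pos. unfold Rabs; destruct (Rcase_abs phi); lra.
    unfold Rabs; destruct (Rcase_abs phi); lra. }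
  nra.
Qed.

Definition Hf (q : R) (j : nat) (phi : R) : R := sqrt q * sin phi / (sqrt q * cos phi + bb j).

Lemma Hf_der q j phi : 1 < q -> (j = 1%nat \/ j = 2%nat) ->
  - mm q j < phi < mm q j ->
  is_derive (Hf q j) phi (sqrt q * (sqrt q + bb j * cos phi) / (sqrt q * cos phi + bb j)^2).
Proof.
  intros hq hj hphi. assert (hd := den_pos q j phi hq hj hphi).
  destruct (mm_facts q j hq hj) as (_ & _ & _ & hb).
  unfold Hf. auto_derive.
  - lra.
  - assert (E : sqrt q + bb j * cos phi =
      (sqrt q * cos phi + bb j) * cos phi + sqrt q * sin phi ^ 2).
    { pose proof (sin2_cos2 phi) as S. unfold Rsqr in S.
      transitivity (sqrt q * (sin phi * sin phi + cos phi * cos phi) + bb j * cos phi); [rewrite S; ring | ring]. }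
    rewrite E. field. lra.
Qed.

Lemma Hf_der_lb q j phi : 1 < q -> (j = 1%nat \/ j = 2%nat) ->
  - mm q j < phi < mm q j ->
  sqrt q / (1 + sqrt q) <= sqrt q * (sqrt q + bb j * cos phi) / (sqrt q * cos phi + bb j)^2.
Proof.
  intros hq hj hphi. assert (hd := den_pos q j phi hq hj hphi).
  destruct (mm_facts q j hq hj) as (_ & _ & _ & hb).
  destruct (qfacts q hq) as (hs & _).
  set (s := sqrt q) in *. set (d := s * cos phi + bb j) in *.
  set (u := bb j * cos phi).
  assert (hu : -1 <= u <= 1).
  { pose proof (COS_bound phi). unfold u; destruct hb as [-> | ->]; lra. }
  assert (hd2 : d ^ 2 = (s * u + 1)^2).
  { unfold d, u. destruct hb as [-> | ->]; ring. }
  assert (key : 0 <= (s + u) * (1 + s) - d^2).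
  { rewrite hd2. replace ((s + u) * (1 + s) - (s * u + 1) ^ 2) with
      ((1 - u) * (s*s*(1+u) + s - 1)) by ring.
    apply Rmult_le_pos; nra. }
  assert (E : s * (s + u) / d ^ 2 - s / (1 + s) = s * ((s + u) * (1 + s) - d^2) / (d^2 * (1+s))).
  { field. split; lra. }
  assert (0 <= s * ((s + u) * (1 + s) - d^2) / (d^2 * (1+s))).
  { apply Rdiv_le_0_compat. apply Rmult_le_pos; lra. apply Rmult_lt_0_compat; [apply pow_lt|]; lra. }
  lra.
Qed.

Definition Gf q rho j alpha phi := Hf q j phi - Fr rho (alpha + phi).
Definition dG q rho j alpha phi :=
  sqrt q * (sqrt q + bb j * cos phi) / (sqrt q * cos phi + bb j)^2 - Derive (Fr rho) (alpha + phi).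

Lemma Gf_der q rho j alpha z : 1 < q -> (j = 1%nat \/ j = 2%nat) ->
  (forall t, ex_derive (Fr rho) t) ->
  - mm q j < z < mm q j -> is_derive (Gf q rho j alpha) z (dG q rho j alpha z).
Proof.
  intros hq hj hF hz. unfold Gf, dG.
  apply (is_derive_minus (Hf q j) (fun phi => Fr rho (alpha + phi))).
  - apply Hf_der; auto.
  - assert (H : is_derive (fun phi => Fr rho (alpha + phi)) z (1 * Derive (Fr rho) (alpha + z))).
    { apply (is_derive_comp (Fr rho) (fun phi => alpha + phi)).
      - apply Derive_correct, hF.
      - auto_derive; auto; ring. }
    rewrite Rmult_1_l in H. exact H.
Qed.

Lemma Gf_incr q rho j alpha x y : 1 < q -> (j = 1%nat \/ j = 2%nat) ->
  (forall t, ex_derive (Fr rho) t) ->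
  (forall t, Derive (Fr rho) t < sqrt q / (1 + sqrt q)) ->
  - mm q j < x -> y < mm q j -> x < y ->
  Gf q rho j alpha x < Gf q rho j alpha y.
Proof.
  intros hq hj hF hb hx hy hxy.
  destruct (MVT_gen (Gf q rho j alpha) x y (dG q rho j alpha)) as [c [hc E]].
  - intros z hz. rewrite Rmin_left, Rmax_right in hz by lra.
    apply Gf_der; auto; lra.
  - intros z hz. rewrite Rmin_left, Rmax_right in hz by lra.
    apply continuity_pt_filterlim. apply (ex_derive_continuous (K:=R_AbsRing) (V:=R_NormedModule) (Gf q rho j alpha)).
    exists (dG q rho j alpha z). apply Gf_der; auto; lra.
  - rewrite Rmin_left, Rmax_right in hc by lra.
    assert (0 < dG q rho j alpha c).
    { unfold dG. pose proof (Hf_der_lb q j c hq hj ltac:(lra)). pose proof (hb (alpha + c)). lra. }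
    assert (0 < dG q rho j alpha c * (y - x)) by (apply Rmult_lt_0_compat; lra).
    lra.
Qed.

Lemma Gf_root q rho j alpha : 1 < q -> (j = 1%nat \/ j = 2%nat) ->
  (forall t, ex_derive (Fr rho) t) ->
  exists z, - mm q j < z < mm q j /\ Gf q rho j alpha z = 0.
Proof.
  intros hq hj hF.
  destruct (mm_facts q j hq hj) as (hm & he & hsn & hb).
  destruct (qfacts q hq) as (hs & _).
  set (k := fun phi => sqrt q * sin phi - (sqrt q * cos phi + bb j) * Fr rho (alpha + phi)).
  assert (kc : continuity k).
  { intros z. apply continuity_pt_filterlim.
    apply (ex_derive_continuous (K:=R_AbsRing) (V:=R_NormedModule) k).
    unfold k. auto_derive. apply hF. }
  assert (km : k (- mm q j) < 0).
  { unfold k. rewrite cos_neg, sin_neg, he. nra. }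
  assert (kp : 0 < k (mm q j)).
  { unfold k. rewrite he. nra. }
  destruct (IVT k (- mm q j) (mm q j) kc ltac:(lra) km kp) as [z [hz kz]].
  assert (hz' : - mm q j < z < mm q j).
  { split; apply Rnot_le_lt; intro h.
    - assert (z = - mm q j) by lra. subst z. lra.
    - assert (z = mm q j) by lra. subst z. lra. }
  exists z; split; auto.
  assert (hd := den_pos q j z hq hj hz').
  unfold Gf, Hf. unfold k in kz.
  apply Rminus_diag_eq.
  apply (Rmult_eq_reg_r (sqrt q * cos z + bb j)); [|lra].
  field_simplify; lra.
Qed.

Lemma sgn_pos x : 0 < x -> sgn x = 1.
Proof. intros h; unfold sgn; destruct (Rlt_dec 0 x); [auto|lra]. Qed.
Lemma sgn_neg x : x < 0 -> sgn x = -1.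
Proof. intros h; unfold sgn; destruct (Rlt_dec 0 x); [lra|]. destruct (Rlt_dec x 0); [auto|lra]. Qed.
Lemma sgn_0 : sgn 0 = 0.
Proof. unfold sgn; destruct (Rlt_dec 0 0); [lra|]. destruct (Rlt_dec 0 0); [lra|auto]. Qed.
Lemma sgn_mul_pos a x : 0 < a -> sgn (a * x) = sgn x.
Proof.
  intros ha. destruct (Rtotal_order x 0) as [h|[h|h]].
  - rewrite !sgn_neg; auto. nra.
  - subst; rewrite Rmult_0_r; auto.
  - rewrite !sgn_pos; auto. nra.
Qed.
Lemma sgn_opp x : sgn (- x) = - sgn x.
Proof.
  destruct (Rtotal_order x 0) as [h|[h|h]].
  - rewrite (sgn_pos (- x)), (sgn_neg x); auto; lra.
  - subst; rewrite Ropp_0, sgn_0; ring.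
  - rewrite (sgn_neg (- x)), (sgn_pos x); auto; lra.
Qed.

Lemma Gf_le q rho j alpha x y : 1 < q -> (j = 1%nat \/ j = 2%nat) ->
  (forall t, ex_derive (Fr rho) t) ->
  (forall t, Derive (Fr rho) t < sqrt q / (1 + sqrt q)) ->
  - mm q j < x -> y < mm q j -> x <= y ->
  Gf q rho j alpha x <= Gf q rho j alpha y.
Proof.
  intros. destruct (Rle_lt_or_eq_dec x y H5) as [h|h].
  - left; apply Gf_incr; auto.
  - subst; lra.
Qed.

Lemma Gf_0 q rho j alpha : Gf q rho j alpha 0 = - Fr rho alpha.
Proof. unfold Gf, Hf. rewrite sin_0, Rplus_0_r. unfold Rdiv. ring. Qed.

Lemma loc q rho j alpha phi : 1 < q -> (j = 1%nat \/ j = 2%nat) ->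
  (forall t, ex_derive (Fr rho) t) ->
  (forall t, Derive (Fr rho) t < sqrt q / (1 + sqrt q)) ->
  - mm q j < phi < mm q j -> Gf q rho j alpha phi = 0 ->
  (0 < Fr rho alpha -> 0 < phi) /\ (Fr rho alpha < 0 -> phi < 0) /\
  (Fr rho alpha = 0 -> phi = 0).
Proof.
  intros hq hj hF hb hphi hG.
  destruct (mm_facts q j hq hj) as (hm & _).
  assert (G0 := Gf_0 q rho j alpha).
  repeat split; intros h.
  - apply Rnot_le_lt; intro h'.
    pose proof (Gf_le q rho j alpha phi 0 hq hj hF hb ltac:(lra) ltac:(lra) h'). lra.
  - apply Rnot_le_lt; intro h'.
    pose proof (Gf_le q rho j alpha 0 phi hq hj hF hb ltac:(lra) ltac:(lra) h'). lra.
  - destruct (Rtotal_order phi 0) as [h'|[h'|h']]; auto.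
    + pose proof (Gf_incr q rho j alpha phi 0 hq hj hF hb ltac:(lra) ltac:(lra) h'). lra.
    + pose proof (Gf_incr q rho j alpha 0 phi hq hj hF hb ltac:(lra) ltac:(lra) h'). lra.
Qed.

Lemma sgn_sol q rho j alpha phi : 1 < q -> (j = 1%nat \/ j = 2%nat) ->
  - mm q j < phi < mm q j -> Gf q rho j alpha phi = 0 ->
  sgn (Fr rho (alpha + phi)) = sgn (sin phi).
Proof.
  intros hq hj hphi hG. assert (hd := den_pos q j phi hq hj hphi).
  destruct (qfacts q hq) as (hs & _).
  unfold Gf, Hf in hG.
  replace (Fr rho (alpha + phi)) with ((sqrt q / (sqrt q * cos phi + bb j)) * sin phi).
  - apply sgn_mul_pos. apply Rdiv_lt_0_compat; lra.
  - assert (E : Fr rho (alpha + phi) = sqrt q * sin phi / (sqrt q * cos phi + bb j)) by lra.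
    rewrite E. field. lra.
Qed.

Lemma sin_cmp q a b : 1 < q -> 0 < a < theta_q q -> a < b < PI - theta_q q -> sin a < sin b.
Proof.
  intros hq ha hb. destruct (qfacts q hq) as (_ & _ & ht & _).
  destruct (Rle_lt_dec b (PI/2)) as [h|h].
  - apply sin_increasing_1; lra.
  - rewrite <- (sin_PI_x b). apply sin_increasing_1; lra.
Qed.

Lemma mm1 q : mm q 1 = PI - theta_q q. Proof. reflexivity. Qed.
Lemma mm2 q : mm q 2 = theta_q q. Proof. reflexivity. Qed.
Lemma bb1 : bb 1 = 1. Proof. reflexivity. Qed.
Lemma bb2 : bb 2 = -1. Proof. reflexivity. Qed.

Lemma rho_incr rho a b : (forall t, ex_derive rho t) -> a < b ->
  (forall t, a <= t <= b -> 0 < Derive rho t) -> rho a < rho b.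
Proof.
  intros hd1 hab hD.
  destruct (MVT_gen rho a b (Derive rho)) as [c [hc E]].
  - intros z _. apply Derive_correct, hd1.
  - intros z _. apply continuity_pt_filterlim.
    apply (ex_derive_continuous (K:=R_AbsRing) (V:=R_NormedModule) rho). apply hd1.
  - rewrite Rmin_left, Rmax_right in hc by lra.
    pose proof (hD c hc). assert (0 < Derive rho c * (b - a)) by (apply Rmult_lt_0_compat; lra).
    lra.
Qed.

Lemma rho_decr rho a b : (forall t, ex_derive rho t) -> a < b ->
  (forall t, a <= t <= b -> Derive rho t < 0) -> rho b < rho a.
Proof.
  intros hd1 hab hD.
  destruct (MVT_gen rho a b (Derive rho)) as [c [hc E]].
  - intros z _. apply Derive_correct, hd1.
  - intros z _. apply continuity_pt_filterlim.
    apply (ex_derive_continuous (K:=R_AbsRing) (V:=R_NormedModule) rho). apply hd1.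
  - rewrite Rmin_left, Rmax_right in hc by lra.
    pose proof (hD c hc). assert (Derive rho c * (b - a) < 0).
    { assert (0 < - Derive rho c * (b - a)) by (apply Rmult_lt_0_compat; lra). lra. }
    lra.
Qed.

Lemma D_Fr rho t : (forall t, 0 < rho t) -> Derive rho t = Fr rho t * rho t.
Proof. intros hpos. unfold Fr. field. apply Rgt_not_eq, hpos. Qed.

Lemma Hf_pos q j t : 1 < q -> (j = 1%nat \/ j = 2%nat) -> - mm q j < t < mm q j ->
  0 < sin t -> 0 < Hf q j t.
Proof.
  intros hq hj ht hs. pose proof (den_pos q j t hq hj ht). destruct (qfacts q hq) as (h1 & _).
  unfold Hf. apply Rdiv_lt_0_compat; nra.
Qed.

Lemma Hf_neg q j t : 1 < q -> (j = 1%nat \/ j = 2%nat) -> - mm q j < t < mm q j ->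
  sin t < 0 -> Hf q j t < 0.
Proof.
  intros hq hj ht hs. pose proof (den_pos q j t hq hj ht). destruct (qfacts q hq) as (h1 & _).
  unfold Hf. unfold Rdiv. assert (0 < / (sqrt q * cos t + bb j)) by (apply Rinv_0_lt_compat; lra).
  assert (sqrt q * sin t < 0) by nra. nra.
Qed.

Lemma H21 q t : 1 < q -> - theta_q q < t < theta_q q ->
  Hf q 2 t - Hf q 1 t = sin t * (2 * sqrt q / ((sqrt q * cos t - 1) * (sqrt q * cos t + 1)))
  /\ 0 < 2 * sqrt q / ((sqrt q * cos t - 1) * (sqrt q * cos t + 1)).
Proof.
  intros hq ht.
  assert (d2 := den_pos q 2 t hq (or_intror eq_refl) ltac:(rewrite mm2; lra)).
  rewrite bb2 in d2. destruct (qfacts q hq) as (h1 & _).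
  split.
  - unfold Hf; rewrite bb1, bb2. field. lra.
  - apply Rdiv_lt_0_compat; nra.
Qed.

Lemma core_pos q rho alpha p1 p2 : 1 < q ->
  (forall t, ex_derive (Fr rho) t) ->
  (forall t, Derive (Fr rho) t < sqrt q / (1 + sqrt q)) ->
  (forall t, 0 < rho t) -> (forall t, ex_derive rho t) ->
  - mm q 1 < p1 < mm q 1 -> Gf q rho 1 alpha p1 = 0 ->
  - mm q 2 < p2 < mm q 2 -> Gf q rho 2 alpha p2 = 0 ->
  0 < Fr rho alpha ->
  0 < p2 < p1 /\ 0 < sin p2 < sin p1 /\ rho (alpha + p2) < rho (alpha + p1).
Proof.
  intros hq hF hb hpos hd1 h1 g1 h2 g2 hf.
  assert (j1 : (1 = 1 \/ 1 = 2)%nat) by auto.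
  assert (j2 : (2 = 1 \/ 2 = 2)%nat) by auto.
  destruct (qfacts q hq) as (hs & hc & ht & hsn).
  assert (hP := PI_RGT_0).
  assert (h1' := h1). assert (h2' := h2). rewrite mm1 in h1. rewrite mm2 in h2.
  destruct (loc q rho 1 alpha p1 hq j1 hF hb h1' g1) as [l1 _].
  destruct (loc q rho 2 alpha p2 hq j2 hF hb h2' g2) as [l2 _].
  specialize (l1 hf). specialize (l2 hf).
  assert (s1 : 0 < sin p1) by (apply sin_gt_0; lra).
  assert (lt : p2 < p1).
  { apply Rnot_le_lt; intro h.
    destruct (H21 q p1 hq ltac:(lra)) as [E P].
    assert (0 < Gf q rho 2 alpha p1).
    { unfold Gf in g1 |- *. assert (0 < sin p1 * (2 * sqrt q / ((sqrt q * cos p1 - 1) * (sqrt q * cos p1 + 1))))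
        by (apply Rmult_lt_0_compat; auto). lra. }
    pose proof (Gf_le q rho 2 alpha p1 p2 hq j2 hF hb ltac:(rewrite mm2; lra) ltac:(rewrite mm2; lra) h).
    lra. }
  split; [lra|]. split.
  - split. apply sin_gt_0; lra. apply (sin_cmp q); auto; lra.
  - apply rho_incr; auto; [lra|].
    intros t ht'. rewrite D_Fr; auto. apply Rmult_lt_0_compat; [|apply hpos].
    replace t with (alpha + (t - alpha)) by ring.
    assert (Gf q rho 1 alpha (t - alpha) <= 0).
    { rewrite <- g1. apply Gf_le; auto; try rewrite mm1; lra. }
    assert (0 < Hf q 1 (t - alpha)).
    { apply Hf_pos; auto. try rewrite mm1; lra. apply sin_gt_0; lra. }
    unfold Gf in *. lra.
Qed.

Lemma core_neg q rho alpha p1 p2 : 1 < q ->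
  (forall t, ex_derive (Fr rho) t) ->
  (forall t, Derive (Fr rho) t < sqrt q / (1 + sqrt q)) ->
  (forall t, 0 < rho t) -> (forall t, ex_derive rho t) ->
  - mm q 1 < p1 < mm q 1 -> Gf q rho 1 alpha p1 = 0 ->
  - mm q 2 < p2 < mm q 2 -> Gf q rho 2 alpha p2 = 0 ->
  Fr rho alpha < 0 ->
  p1 < p2 < 0 /\ sin p1 < sin p2 < 0 /\ rho (alpha + p2) < rho (alpha + p1).
Proof.
  intros hq hF hb hpos hd1 h1 g1 h2 g2 hf.
  assert (j1 : (1 = 1 \/ 1 = 2)%nat) by auto.
  assert (j2 : (2 = 1 \/ 2 = 2)%nat) by auto.
  destruct (qfacts q hq) as (hs & hc & ht & hsn).
  assert (hP := PI_RGT_0).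
  assert (h1' := h1). assert (h2' := h2). rewrite mm1 in h1. rewrite mm2 in h2.
  destruct (loc q rho 1 alpha p1 hq j1 hF hb h1' g1) as [_ [l1 _]].
  destruct (loc q rho 2 alpha p2 hq j2 hF hb h2' g2) as [_ [l2 _]].
  specialize (l1 hf). specialize (l2 hf).
  assert (s1 : sin p1 < 0).
  { rewrite <- (Ropp_involutive p1), sin_neg. assert (0 < sin (- p1)) by (apply sin_gt_0; lra). lra. }
  assert (lt : p1 < p2).
  { apply Rnot_le_lt; intro h.
    destruct (H21 q p1 hq ltac:(lra)) as [E P].
    assert (Gf q rho 2 alpha p1 < 0).
    { unfold Gf in g1 |- *. assert (0 < - sin p1 * (2 * sqrt q / ((sqrt q * cos p1 - 1) * (sqrt q * cos p1 + 1))))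
        by (apply Rmult_lt_0_compat; lra). lra. }
    pose proof (Gf_le q rho 2 alpha p2 p1 hq j2 hF hb ltac:(rewrite mm2; lra) ltac:(rewrite mm2; lra) h).
    lra. }
  split; [lra|]. split.
  - assert (sin p1 = - sin (- p1)) by (rewrite sin_neg; ring).
    assert (sin p2 = - sin (- p2)) by (rewrite sin_neg; ring).
    assert (0 < sin (- p2)) by (apply sin_gt_0; lra).
    assert (sin (- p2) < sin (- p1)) by (apply (sin_cmp q); auto; lra).
    lra.
  - apply rho_decr; auto; [lra|].
    intros t ht'. rewrite D_Fr; auto.
    assert (0 < rho t) by apply hpos.
    replace t with (alpha + (t - alpha)) by ring.
    assert (0 <= Gf q rho 1 alpha (t - alpha)).
    { rewrite <- g1. apply Gf_le; auto; try rewrite mm1; lra. }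
    assert (Hf q 1 (t - alpha) < 0).
    { apply Hf_neg; auto. try rewrite mm1; lra.
      rewrite <- (Ropp_involutive (t - alpha)), sin_neg.
      assert (0 < sin (- (t - alpha))) by (apply sin_gt_0; lra). lra. }
    unfold Gf in *.
    replace (alpha + (t - alpha)) with t by ring.
    assert (Fr rho t < 0).
    { replace t with (alpha + (t - alpha)) by ring. lra. }
    nra.
Qed.

Definition dd (j : nat) : R := if Nat.eqb j 1 then 0 else PI.

Lemma hfun_per q t : hfun q (t + 2*PI) = hfun q t.
Proof.
  unfold hfun. rewrite sin_plus, cos_plus, sin_2PI, cos_2PI. f_equal; f_equal; ring.
Qed.

Lemma hfun_Hf q j phi : 1 < q -> (j = 1%nat \/ j = 2%nat) -> - mm q j < phi < mm q j ->
  hfun q (phi + dd j) = Hf q j phi.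
Proof.
  intros hq hj hphi. pose proof (den_pos q j phi hq hj hphi) as hd.
  destruct hj as [-> | ->]; unfold dd, hfun, Hf in *; simpl in *.
  - rewrite Rplus_0_r. reflexivity.
  - rewrite neg_sin, neg_cos. rewrite bb2 in *. field. lra.
Qed.

Lemma sol_of_isT q rho th j l T beta n : 1 < q ->
  (forall t, rho (t + 2*PI) = rho t) -> (forall t, 0 < rho t) -> (forall t, ex_derive rho t) ->
  (j = 1%nat \/ j = 2%nat) -> isT q rho th j l T ->
  beta = eta_ang th l + dd j + 2*PI*IZR n ->
  exists phi k, - mm q j < phi < mm q j /\ Gf q rho j beta phi = 0 /\
    T = beta + phi + 2*PI*IZR k.
Proof.
  intros hq hper hpos hd1 hj [E [k0 Hin]] hbeta.
  set (x := T - eta_ang th l + 2 * PI * IZR k0) in *.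
  assert (hphi : - mm q j < x - dd j < mm q j).
  { destruct hj as [-> | ->]; unfold in_Tint, mm, dd in *; simpl in *; lra. }
  exists (x - dd j), (- (n + k0))%Z.
  split; [auto|split].
  - unfold Gf. rewrite <- hfun_Hf by auto.
    replace (x - dd j + dd j) with (T - eta_ang th l + 2 * PI * IZR k0) by (unfold x; ring).
    rewrite (per_Z (hfun q) (hfun_per q)).
    replace (beta + (x - dd j)) with (T + 2 * PI * IZR (n + k0)) by (unfold x; rewrite hbeta, plus_IZR; ring).
    rewrite (per_Z (Fr rho) (Fr_per rho hper hd1)).
    rewrite <- (dln_eq rho hpos hd1). lra.
  - unfold x. rewrite hbeta, opp_IZR, plus_IZR. ring.
Qed.

Lemma isT_of_sol q rho th j l phi : 1 < q ->
  (forall t, 0 < rho t) -> (forall t, ex_derive rho t) ->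
  (j = 1%nat \/ j = 2%nat) -> - mm q j < phi < mm q j ->
  Gf q rho j (eta_ang th l + dd j) phi = 0 ->
  isT q rho th j l (eta_ang th l + dd j + phi).
Proof.
  intros hq hpos hd1 hj hphi hG. split.
  - rewrite (dln_eq rho hpos hd1).
    replace (eta_ang th l + dd j + phi - eta_ang th l) with (phi + dd j) by ring.
    rewrite hfun_Hf by auto. unfold Gf in hG. lra.
  - exists 0%Z. rewrite Rmult_0_r, Rplus_0_r.
    replace (eta_ang th l + dd j + phi - eta_ang th l) with (phi + dd j) by ring.
    destruct hj as [-> | ->]; unfold in_Tint, mm, dd in *; simpl in *; lra.
Qed.

Lemma sgn_D rho t : (forall t, 0 < rho t) -> sgn (Derive rho t) = sgn (Fr rho t).
Proof. intros hpos. rewrite D_Fr, Rmult_comm by auto. apply sgn_mul_pos, hpos. Qed.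

Lemma core_all q rho alpha p1 p2 : 1 < q ->
  (forall t, ex_derive (Fr rho) t) ->
  (forall t, Derive (Fr rho) t < sqrt q / (1 + sqrt q)) ->
  (forall t, 0 < rho t) -> (forall t, ex_derive rho t) ->
  - mm q 1 < p1 < mm q 1 -> Gf q rho 1 alpha p1 = 0 ->
  - mm q 2 < p2 < mm q 2 -> Gf q rho 2 alpha p2 = 0 ->
  sgn (Derive rho (alpha + p1)) = sgn (sin p1) /\ sgn (sin p1) = sgn (sin p2) /\
  sgn (sin p2) = sgn (Derive rho (alpha + p2)) /\
  (Fr rho alpha <> 0 -> 0 < Rabs p2 /\ Rabs p2 < Rabs p1 /\ Rabs p1 < PI - theta_q q /\
     rho (alpha + p2) < rho (alpha + p1) /\ 0 < Rabs (sin p2) /\ Rabs (sin p2) < Rabs (sin p1)).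
Proof.
  intros hq hF hb hpos hd1 h1 g1 h2 g2.
  assert (j1 : (1 = 1 \/ 1 = 2)%nat) by auto.
  assert (j2 : (2 = 1 \/ 2 = 2)%nat) by auto.
  split; [rewrite sgn_D by auto; apply (sgn_sol q rho 1); auto|].
  split; [|split; [rewrite sgn_D by auto; symmetry; apply (sgn_sol q rho 2); auto|]].
  - destruct (Rtotal_order (Fr rho alpha) 0) as [h|[h|h]].
    + destruct (core_neg q rho alpha p1 p2) as (_ & hs & _); auto.
      rewrite !sgn_neg; auto; lra.
    + destruct (loc q rho 1 alpha p1 hq j1 hF hb h1 g1) as (_ & _ & e1).
      destruct (loc q rho 2 alpha p2 hq j2 hF hb h2 g2) as (_ & _ & e2).
      rewrite (e1 h), (e2 h). reflexivity.
    + destruct (core_pos q rho alpha p1 p2) as (_ & hs & _); auto.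
      rewrite !sgn_pos; auto; lra.
  - intros hne. rewrite mm1 in h1.
    destruct (Rtotal_order (Fr rho alpha) 0) as [h|[h|h]]; [|contradiction|].
    + destruct (core_neg q rho alpha p1 p2) as (hp & hs & hr); auto.
      rewrite !Rabs_left by lra. try rewrite (Rabs_left p1) by lra.
      repeat split; lra.
    + destruct (core_pos q rho alpha p1 p2) as (hp & hs & hr); auto.
      rewrite !Rabs_right by lra. try rewrite (Rabs_right p1) by lra.
      repeat split; lra.
Qed.

Lemma sin_shift x k : sin (x + 2*PI*IZR k) = sin x.
Proof. apply (per_Z sin). intros t. rewrite sin_plus, sin_2PI, cos_2PI. ring. Qed.

Theorem lemma6 (q : R) (rho : R -> R)
  (hq : 1 < q)
  (hper : forall t, rho (t + 2 * PI) = rho t)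
  (hpos : forall t, 0 < rho t)
  (hd1 : forall t, ex_derive rho t)
  (hd2 : forall t, ex_derive (Derive rho) t)
  (hc2 : forall t, continuous (Derive (Derive rho)) t)
  (hconv : forall t,
      Derive (Derive (fun s => ln (rho s))) t < sqrt q / (1 + sqrt q)) :
  forall (th_eta : R) (l : nat), (l = 1%nat \/ l = 2%nat) ->
    (forall j : nat, (j = 1%nat \/ j = 2%nat) ->
       (exists T, isT q rho th_eta j l T) /\
       (forall T T', isT q rho th_eta j l T -> isT q rho th_eta j l T' ->
                     congr2pi T T')) /\
    (forall T1 T2 : R,
       isT q rho th_eta 1 l T1 -> isT q rho th_eta 2 (lnext l) T2 ->
       (sgn (Derive rho T1) = (-1) ^ (l - 1) * sgn (sin (T1 - th_eta)) /\
        (-1) ^ (l - 1) * sgn (sin (T1 - th_eta))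
          = (-1) ^ (l - 1) * sgn (sin (T2 - th_eta)) /\
        (-1) ^ (l - 1) * sgn (sin (T2 - th_eta)) = sgn (Derive rho T2)) /\
       (Derive rho (eta_ang th_eta l) <> 0 ->
          (forall d1 d2 : R,
             angrep (T1 - eta_ang th_eta l) d1 ->
             angrep (T2 - eta_ang th_eta l) d2 ->
             0 < Rabs d2 /\ Rabs d2 < Rabs d1 /\ Rabs d1 < PI - theta_q q) /\
          rho T2 < rho T1 /\
          0 < Rabs (sin (T2 - th_eta)) /\
          Rabs (sin (T2 - th_eta)) < Rabs (sin (T1 - th_eta)))).
Proof.
  assert (hF := Fr_der rho hpos hd1 hd2).
  assert (hb := Fr_bound q rho hpos hd1 hconv).
  destruct (qfacts q hq) as (hs & hc & ht & hsn).
  assert (hP := PI_RGT_0).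
  intros th l hl. split.
  - intros j hj. split.
    + destruct (Gf_root q rho j (eta_ang th l + dd j) hq hj hF) as [z [hz gz]].
      exists (eta_ang th l + dd j + z). apply isT_of_sol; auto.
    + intros T T' iT iT'.
      destruct (sol_of_isT q rho th j l T (eta_ang th l + dd j) 0 hq hper hpos hd1 hj iT
        ltac:(simpl; ring)) as (p & k & hp & gp & eT).
      destruct (sol_of_isT q rho th j l T' (eta_ang th l + dd j) 0 hq hper hpos hd1 hj iT'
        ltac:(simpl; ring)) as (p' & k' & hp' & gp' & eT').
      assert (p = p').
      { destruct (Rtotal_order p p') as [h|[h|h]]; auto.
        - pose proof (Gf_incr q rho j (eta_ang th l + dd j) p p' hq hj hF hb ltac:(lra) ltac:(lra) h). lra.
        - pose proof (Gf_incr q rho j (eta_ang th l + dd j) p' p hq hj hF hb ltac:(lra) ltac:(lra) h). lra. }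
      subst p'. exists (k - k')%Z. rewrite eT, eT', minus_IZR. ring.
  - intros T1 T2 i1 i2.
    set (al := eta_ang th l).
    destruct (sol_of_isT q rho th 1 l T1 al 0 hq hper hpos hd1 (or_introl eq_refl) i1
        ltac:(unfold al, dd; simpl; ring)) as (p1 & k1 & h1 & g1 & e1).
    assert (hn : exists n, al = eta_ang th (lnext l) + dd 2 + 2 * PI * IZR n).
    { destruct hl as [-> | ->].
      - exists (-1)%Z. unfold al, eta_ang, lnext, dd; simpl. ring.
      - exists 0%Z. unfold al, eta_ang, lnext, dd; simpl. ring. }
    destruct hn as [n hn].
    destruct (sol_of_isT q rho th 2 (lnext l) T2 al n hq hper hpos hd1 (or_intror eq_refl) i2 hn)
      as (p2 & k2 & h2 & g2 & e2).
    destruct (core_all q rho al p1 p2 hq hF hb hpos hd1 h1 g1 h2 g2) as (c1 & c2 & c3 & c4).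
    assert (DT1 : Derive rho T1 = Derive rho (al + p1))
      by (rewrite e1; apply (per_Z (Derive rho) (Dper rho hper hd1))).
    assert (DT2 : Derive rho T2 = Derive rho (al + p2))
      by (rewrite e2; apply (per_Z (Derive rho) (Dper rho hper hd1))).
    assert (RT1 : rho T1 = rho (al + p1)) by (rewrite e1; apply (per_Z rho hper)).
    assert (RT2 : rho T2 = rho (al + p2)) by (rewrite e2; apply (per_Z rho hper)).
    assert (hsig : exists sg, (-1) ^ (l - 1) = sg /\ (sg = 1 \/ sg = -1) /\
        sin (T1 - th) = sg * sin p1 /\ sin (T2 - th) = sg * sin p2).
    { destruct hl as [-> | ->]; simpl.
      - exists 1. split; [ring|]. split; [auto|].
        unfold al, eta_ang in e1, e2; simpl in e1, e2.
        split.
        + replace (T1 - th) with (p1 + 2 * PI * IZR k1) by (rewrite e1; ring).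
          rewrite sin_shift; ring.
        + replace (T2 - th) with (p2 + 2 * PI * IZR k2) by (rewrite e2; ring).
          rewrite sin_shift; ring.
      - exists (-1). split; [ring|]. split; [auto|].
        unfold al, eta_ang in e1, e2; simpl in e1, e2.
        split.
        + replace (T1 - th) with ((p1 + PI) + 2 * PI * IZR k1) by (rewrite e1; ring).
          rewrite sin_shift, neg_sin; ring.
        + replace (T2 - th) with ((p2 + PI) + 2 * PI * IZR k2) by (rewrite e2; ring).
          rewrite sin_shift, neg_sin; ring. }
    destruct hsig as (sg & esg & hsg & s1 & s2).
    rewrite esg, s1, s2, DT1, DT2.
    assert (SG : forall x, sg * sgn (sg * x) = sgn x).
    { intros x. destruct hsg as [-> | ->].
      - rewrite !Rmult_1_l. reflexivity.
      - replace (-1 * x) with (- x) by ring. rewrite sgn_opp. ring. }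
    rewrite !SG. split; [split; [|split]; auto|].
    intros hD.
    assert (hFa : Fr rho al <> 0).
    { unfold Fr. intro h. apply hD. fold al.
      assert (0 < rho al) by apply hpos.
      apply (Rmult_eq_reg_r (/ rho al)). rewrite Rmult_0_l. exact h.
      apply Rgt_not_eq, Rinv_0_lt_compat; auto. }
    destruct (c4 hFa) as (a1 & a2 & a3 & a4 & a5 & a6).
    assert (AS : forall x, Rabs (sg * x) = Rabs x).
    { intros x. rewrite Rabs_mult. destruct hsg as [-> | ->].
      - rewrite Rabs_R1; ring.
      - rewrite (Rabs_left (-1)) by lra; ring. }
    rewrite !AS, RT1, RT2.
    split; [|repeat split; auto].
    intros d1 d2 [r1 [m1 q1]] [r2 [m2 q2]].
    rewrite mm1 in h1. rewrite mm2 in h2.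
    assert (d1 = p1).
    { symmetry. apply (angrep_uniq p1 d1 (m1 - k1)); try lra.
      rewrite minus_IZR. fold al in q1. lra. }
    assert (d2 = p2).
    { symmetry. apply (angrep_uniq p2 d2 (m2 - k2)); try lra.
      rewrite minus_IZR. fold al in q2. lra. }
    subst d1 d2. auto.
Qed.
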